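(* Suppose $\theta_t=\theta$ for all $t$ (a constant) and $\mathbb{S}_\theta=\{\theta\in\mathbb{R}^{d_\theta}:[\theta]_k\ge0\ \forall k,\ \sum_{k=1}^{d_\theta}[\theta]_k=1\}$. Then the system $x_{t+1}=A_t(\theta)x_t+B_t(\theta)u_t$ is time-invariant SMP in each of the following cases. (i) ($v_t$ i.i.d.) $v_t(\theta)=v_t$ is i.i.d. with respect to $t$ and independent of $\theta$: it is TI SMP with $N=1$, $\phi(\theta)=1$, $M^{(1)}=\mathrm{E}[v_tv_t^\top]$. (ii) (deterministic polytope) $v_t(\theta)=\sum_{k=1}^{d_\theta}[\theta]_kv^{(k)}$ with deterministic vectors $v^{(k)}\in\mathbb{R}^{n(n+m)}$, and the conditional expectation $\mathrm{E}[v_tv_t^\top|\theta]$ is taken as the deterministic value $v_tv_t^\top$: it is TI SMP with $N=d_\theta^2$, $\phi(\theta)=\mathrm{vec}(\theta\theta^\top)$, $M^{(d_\theta(k'-1)+k)}=\tfrac12\big(v^{(k)}v^{(k')\top}+v^{(k')}v^{(k)\top}\big)$ for $k,k'\in\{1,\dots,d_\theta\}$. (iii) (random polytope) $v_t(\theta)=\sum_{k=1}^{d_\theta}[\theta]_kv_t^{(k)}$ where the random vertices $v_t^{(k)}$ are i.i.d. with respect to $t$ and independent of $\theta$: it is TI SMP with $N=d_\theta^2$, $\phi(\theta)=\mathrm{vec}(\theta\theta^\top)$, $M^{(d_\theta(k'-1)+k)}=\tfrac12\mathrm{E}\big[v_t^{(k)}v_t^{(k')\top}+v_t^{(k')}v_t^{(k)\top}\big]$.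 (iv) (uncertain mean and covariance) $\mathrm{E}[v_t(\theta)|\theta]=\sum_{k=1}^{d_\theta}[\theta]_k\mu^{(k)}$ and $\mathrm{Cov}[v_t(\theta)|\theta]=\sum_{k=1}^{d_\theta}[\theta]_k\Sigma^{(k)}$ with deterministic $\mu^{(k)}\in\mathbb{R}^{n(n+m)}$ and symmetric $\Sigma^{(k)}$: it is TI SMP with $N=d_\theta^2$, $\phi(\theta)=\mathrm{vec}(\theta\theta^\top)$, $M^{(d_\theta(k'-1)+k)}=\tfrac12\big(\mu^{(k)}\mu^{(k')\top}+\mu^{(k')}\mu^{(k)\top}\big)+\Sigma^{(k)}$.
   Context: System $x_{t+1}=A_t(\theta_t)x_t+B_t(\theta_t)u_t$ with $x_t\in\mathbb{R}^n$, $u_t\in\mathbb{R}^m$, uncertain $\theta_t\in\mathbb{S}_\theta\subset\mathbb{R}^{d_\theta}$, and random $v_t(\theta_t):=\mathrm{vec}([A_t(\theta_t),B_t(\theta_t)])\in\mathbb{R}^{n(n+m)}$ ($\mathrm{vec}$ stacks columns), distributed according to a conditional density $p(v_t\mid\theta_t)$ independently over $t$; $\mathrm{E}[\cdot|\theta]$ and $\mathrm{Cov}[\cdot|\theta]$ are conditional expectation/covariance given the parameter sequence. $\mathbb{P}_N:=\{\varphi\in\mathbb{R}^N:\varphi_k\ge0,\sum\varphi_k=1\}$. The system is second moment polytopic (SMP) if there exist a positive integer $N$, symmetric $M^{(1)},\dots,M^{(N)}\in\mathbb{R}^{n(n+m)\times n(n+m)}$ and a map $\phi:\mathbb{S}_\theta\to\mathbb{P}_N$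 with $\mathrm{E}[v_t(\theta_t)v_t(\theta_t)^\top|\theta_\bullet]=\sum_{k=1}^N[\phi(\theta_t)]_kM^{(k)}$ for all $t$ and all parameter sequences; it is time-invariant (TI) SMP if moreover $\theta_t=\theta$ is constant. *)

(* Defs.v *)
From HB Require Import structures.
From mathcomp Require Import all_boot all_order all_algebra.
From mathcomp Require Import all_classical all_reals.
From mathcomp Require Import measure lebesgue_measure lebesgue_integral hoelder probability.
Set Implicit Arguments. Unset Strict Implicit. Unset Printing Implicit Defensive.
Import Order.TTheory GRing.Theory Num.Theory.
Local Open Scope classical_set_scope.
Local Open Scope ring_scope.

(* Column-stacking vectorisation vec : R^{p x q} -> R^{pq}.              *)
(* Index k (0-based) of vec A corresponds to the pair (j, i) with       *)
(* k = j * p + i, i.e. entry A i j (i row, j column).                   *)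
Definition vec_pair (p q : nat) (k : 'I_(q * p)) : 'I_q * 'I_p :=
  enum_val (cast_ord (esym (mxvec_cast q p)) k).

Definition colvec {R : Type} (p q : nat) (A : 'M[R]_(p, q)) : 'cV[R]_(q * p) :=
  \col_k A (vec_pair k).2 (vec_pair k).1.

Definition simplex {R : numDomainType} (N : nat) (phi : 'cV[R]_N) : Prop :=
  (forall k, 0 <= phi k 0) /\ \sum_k phi k 0 = 1.

Definition vAB {R : Type} {Omega Theta : Type} (n m : nat)
  (A : nat -> Theta -> Omega -> 'M[R]_n) (B : nat -> Theta -> Omega -> 'M[R]_(n, m))
  (t : nat) (theta : Theta) (w : Omega) : 'cV[R]_((n + m) * n) :=
  colvec (row_mx (A t theta w) (B t theta w)).

Section Prob.
Context {R : realType} {d : measure_display} {Omega : measurableType d}.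
Variable P : probability Omega R.

Definition smom (D : nat) (X : Omega -> 'cV[R]_D) (i j : 'I_D) : \bar R :=
  'E_P[fun w => X w i 0 * X w j 0].

(* These form a pi-system
   generating the sigma-algebra of the random vector (X_i)_i. *)
Definition rect_event (I : finType) (X : I -> Omega -> R) (B : I -> set R) : set Omega :=
  \bigcap_(i in [set: I]) (X i @^-1` B i).

Definition indep_seq (I : finType) (X : nat -> I -> Omega -> R) : Prop :=
  forall (s : seq nat), uniq s ->
  forall B : nat -> I -> set R, (forall t i, measurable (B t i)) ->
  P (\bigcap_(t in [set t | t \in s]) rect_event (X t) (B t)) =
  (\prod_(t <- s) P (rect_event (X t) (B t)))%E.

Definition ident_distr (I : finType) (X : nat -> I -> Omega -> R) : Prop :=
  forall t (B : I -> set R), (forall i, measurable (B i)) ->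
  P (rect_event (X t) B) = P (rect_event (X 0%N) B).

Definition iid (I : finType) (X : nat -> I -> Omega -> R) : Prop :=
  indep_seq X /\ ident_distr X.

(* The parameter
   theta is constant in time; E[ . | theta] is the expectation of the
   random quantity v_t(theta) for that (fixed) parameter value. *)
Definition TI_SMP_with (dth D : nat) (S : set 'cV[R]_dth)
  (v : nat -> 'cV[R]_dth -> Omega -> 'cV[R]_D)
  (N : nat) (M : 'I_N -> 'M[R]_D) (phi : 'cV[R]_dth -> 'cV[R]_N) : Prop :=
  [/\ forall k, (M k)^T = M k,
      forall theta, S theta -> simplex (phi theta) &
      forall t theta, S theta -> forall i j : 'I_D,
        smom (v t theta) i j = (\sum_k (phi theta) k 0 * M k i j)%:E].

Definition TI_SMP (dth D : nat) (S : set 'cV[R]_dth)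
  (v : nat -> 'cV[R]_dth -> Omega -> 'cV[R]_D) : Prop :=
  exists N (M : 'I_N -> 'M[R]_D) (phi : 'cV[R]_dth -> 'cV[R]_N),
    (0 < N)%N /\ TI_SMP_with S v M phi.

End Prob.

Definition phi_poly {R : comNzRingType} (dth : nat) (theta : 'cV[R]_dth) : 'cV[R]_(dth * dth) :=
  colvec (theta *m theta^T).

(* M^{(d(k'-1)+k)} = F k k' : index k (0-based) of vec corresponds to (k', k). *)
Definition M_poly {T : Type} (dth : nat) (F : 'I_dth -> 'I_dth -> T) (idx : 'I_(dth * dth)) : T :=
  F (vec_pair idx).2 (vec_pair idx).1.

(* Main.v *)
Require Import Defs.
From HB Require Import structures.
From mathcomp Require Import all_boot all_order all_algebra.
From mathcomp Require Import all_classical all_reals.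
From mathcomp Require Import measure lebesgue_measure lebesgue_integral hoelder probability.
From mathcomp Require Import measurable_realfun numfun.
From mathcomp Require Import ring lra.
Import Order.TTheory GRing.Theory Num.Theory.
Local Open Scope classical_set_scope.
Local Open Scope ring_scope.


Section Alg.
Variable R : realType.
Lemma mulmx_tr_entry D (u v : 'cV[R]_D) i j : (u *m v^T) i j = u i 0 * v j 0.
Proof. by rewrite !mxE big_ord1 !mxE. Qed.
Lemma phi_entry dth (th : 'cV[R]_dth) k :
  phi_poly th k 0 = th (vec_pair k).2 0 * th (vec_pair k).1 0.
Proof. by rewrite /phi_poly /colvec mxE mulmx_tr_entry. Qed.
Lemma sum_prod dth (x y : 'I_dth -> R) :
  (\sum_a x a) * (\sum_b y b) = \sum_a \sum_b x a * y b.
Proof. rewrite mulr_suml; apply: eq_bigr => a _; by rewrite mulr_sumr. Qed.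
Lemma sym_sum dth (th : 'I_dth -> R) (g : 'I_dth -> 'I_dth -> R) :
  \sum_a \sum_b th b * th a * (2^-1 * (g b a + g a b)) =
  \sum_a \sum_b th a * th b * g a b.
Proof.
set S := (X in _ = X).
have S1 : \sum_a \sum_b th b * th a * g b a = S by rewrite exchange_big.
transitivity (\sum_a (\sum_b 2^-1 * (th b * th a * g b a) + \sum_b 2^-1 * (th a * th b * g a b))).
  apply: eq_bigr => a _; rewrite -big_split; apply: eq_bigr => b _ /=; ring.
rewrite big_split /=.
rewrite (eq_bigr (fun a => 2^-1 * \sum_b th b * th a * g b a)); last by move=> a _; rewrite mulr_sumr.
rewrite [X in _ + X](eq_bigr (fun a => 2^-1 * \sum_b th a * th b * g a b)); last by move=> a _; rewrite mulr_sumr.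
rewrite -!mulr_sumr S1 -/S; field; rewrite ?pnatr_eq0 //.
Qed.
Lemma sum_vec_pair (q p : nat) (G : 'I_q * 'I_p -> R) :
  \sum_(k < q * p) G (vec_pair k) = \sum_a \sum_b G (a, b).
Proof.
rewrite pair_bigA /=.
rewrite [RHS](big_enum_val (A := predT)) /=.
rewrite [RHS](reindex (cast_ord (esym (mxvec_cast q p)))) /=.
  by apply: eq_bigr => i _; rewrite -surjective_pairing.
by exists (cast_ord (mxvec_cast q p)) => i _; rewrite ?cast_ordK ?cast_ordKV.
Qed.
Lemma simplex_phi dth (th : 'cV[R]_dth) : simplex th -> simplex (phi_poly th).
Proof.
move=> [th0 th1]; split.
  by move=> k; rewrite phi_entry mulr_ge0.
rewrite (eq_bigr (fun k => th (vec_pair k).2 0 * th (vec_pair k).1 0)); last by move=> k _; rewrite phi_entry.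
rewrite (@sum_vec_pair _ _ (fun p => th p.2 0 * th p.1 0)) /=.
by rewrite exchange_big /= -(@sum_prod _ (fun b => th b 0) (fun a => th a 0)) th1 mulr1.
Qed.
Lemma sum_phiM dth D (th : 'cV[R]_dth) (F : 'I_dth -> 'I_dth -> 'M[R]_D) i j :
  \sum_k phi_poly th k 0 * M_poly F k i j = \sum_a \sum_b th b 0 * th a 0 * F b a i j.
Proof.
rewrite (eq_bigr (fun k => th (vec_pair k).2 0 * th (vec_pair k).1 0 * F (vec_pair k).2 (vec_pair k).1 i j)); last by move=> k _; rewrite phi_entry.
by rewrite (@sum_vec_pair _ _ (fun p => th p.2 0 * th p.1 0 * F p.2 p.1 i j)).
Qed.
Lemma M_poly_sym dth D (F : 'I_dth -> 'I_dth -> 'M[R]_D) :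
  (forall a b, (F a b)^T = F a b) -> forall k, (M_poly F k)^T = M_poly F k.
Proof. by move=> H k; rewrite /M_poly H. Qed.
End Alg.
Section Key.
Context {R : realType} {d : measure_display} {Omega : measurableType d}.
Variable P : probability Omega R.

Lemma push_eq (X1 X2 Y1 Y2 : Omega -> R) :
  measurable_fun setT X1 -> measurable_fun setT X2 ->
  measurable_fun setT Y1 -> measurable_fun setT Y2 ->
  (forall A B, measurable A -> measurable B ->
     P (X1 @^-1` A `&` X2 @^-1` B) = P (Y1 @^-1` A `&` Y2 @^-1` B)) ->
  forall C : set (R * R), measurable C ->
  pushforward P (fun w => (X1 w, X2 w)) C = pushforward P (fun w => (Y1 w, Y2 w)) C.
Proof.
move=> mX1 mX2 mY1 mY2 H.
have mphi : measurable_fun setT (fun w => (X1 w, X2 w)) by exact: measurable_fun_pair.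
have mpsi : measurable_fun setT (fun w => (Y1 w, Y2 w)) by exact: measurable_fun_pair.
move=> C mC.
apply: (@measure_unique _ _ _ [set A `*` B | A in measurable & B in measurable] (fun _ => setT)) => //.
- exact: measurable_prod_measurableType.
- move=> _ _ [A mA [B mB <-]] [A' mA' [B' mB' <-]].
  exists (A `&` A'); first exact: measurableI.
  exists (B `&` B'); first exact: measurableI.
  by rewrite setXI.
- by move=> _; exists setT => //; exists setT => //; rewrite setXTT.
- by rewrite bigcup_const.
- move=> _ [A mA [B mB <-]]; rewrite /pushforward.
  exact: H.
- move=> _ /=; rewrite /pushforward.
  by rewrite [X in P X](_ : _ = setT) // probability_setT ltry.
Qed.

Lemma E_mul_law (X1 X2 Y1 Y2 : Omega -> R) :
  measurable_fun setT X1 -> measurable_fun setT X2 ->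
  measurable_fun setT Y1 -> measurable_fun setT Y2 ->
  (forall A B, measurable A -> measurable B ->
     P (X1 @^-1` A `&` X2 @^-1` B) = P (Y1 @^-1` A `&` Y2 @^-1` B)) ->
  ('E_P[fun w => (X1 w * X2 w)%R] = 'E_P[fun w => (Y1 w * Y2 w)%R])%E.
Proof.
move=> mX1 mX2 mY1 mY2 H.
have mphi : measurable_fun setT (fun w => (X1 w, X2 w)) by exact: measurable_fun_pair.
have mpsi : measurable_fun setT (fun w => (Y1 w, Y2 w)) by exact: measurable_fun_pair.
pose f := fun p : R * R => (p.1 * p.2)%:E.
have mf : measurable_fun [set: R * R] f.
  apply/measurable_EFinP; apply: measurable_funM.
  exact: measurable_fst. exact: measurable_snd.
have mfp : measurable_fun [set: R * R] (funepos f) by exact: measurable_funepos.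
have mfn : measurable_fun [set: R * R] (funeneg f) by exact: measurable_funeneg.
have pe := @push_eq X1 X2 Y1 Y2 mX1 mX2 mY1 mY2 H.
rewrite unlock.
transitivity (\int[P]_w (f \o (fun w => (X1 w, X2 w))) w)%E; first by [].
transitivity (\int[P]_w (f \o (fun w => (Y1 w, Y2 w))) w)%E; last by [].
rewrite integralE [in RHS]integralE.
pose phi := fun w => (X1 w, X2 w).
pose psi := fun w => (Y1 w, Y2 w).
have E1 : (\int[P]_x ((f \o phi)^\+ x) = \int[pushforward P phi]_(y in setT) f^\+ y)%E.
  rewrite (@ge0_integral_pushforward _ _ _ _ R _ mphi P setT (funepos f) measurableT (measurable_funTS mfp) (fun _ _ => funepos_ge0 _ _)).
  by rewrite funepos_comp preimage_setT.
have E2 : (\int[P]_x ((f \o phi)^\- x) = \int[pushforward P phi]_(y in setT) f^\- y)%E.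
  by rewrite (@ge0_integral_pushforward _ _ _ _ R _ mphi P setT (funeneg f) measurableT (measurable_funTS mfn) (fun _ _ => funeneg_ge0 _ _)) funeneg_comp preimage_setT.
have E3 : (\int[P]_x ((f \o psi)^\+ x) = \int[pushforward P psi]_(y in setT) f^\+ y)%E.
  by rewrite (@ge0_integral_pushforward _ _ _ _ R _ mpsi P setT (funepos f) measurableT (measurable_funTS mfp) (fun _ _ => funepos_ge0 _ _)) funepos_comp preimage_setT.
have E4 : (\int[P]_x ((f \o psi)^\- x) = \int[pushforward P psi]_(y in setT) f^\- y)%E.
  by rewrite (@ge0_integral_pushforward _ _ _ _ R _ mpsi P setT (funeneg f) measurableT (measurable_funTS mfn) (fun _ _ => funeneg_ge0 _ _)) funeneg_comp preimage_setT.
rewrite E1 E2 E3 E4.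
congr (_ - _)%E; apply: eq_measure_integral => A mA _; exact: pe.
Qed.

Lemma Lfun_meas (f : Omega -> R) p : f \in Lfun P p -> measurable_fun setT f.
Proof. by move=> /[!inE] /andP[/[!inE]/= mf _]. Qed.

Lemma L2_L1 (f : Omega -> R) : f \in Lfun P 2%:E -> f \in Lfun P 1.
Proof. by apply: Lfun_subset12; exact: fin_num_measure. Qed.

Lemma E_lin (I : finType) (c : I -> R) (F : I -> Omega -> R) :
  (forall k, F k \in Lfun P 1) ->
  expectation P (fun w => \sum_k c k * F k w) = (\sum_k c k * fine (expectation P (F k)))%:E.
Proof.
move=> HF.
have -> : (fun w => \sum_k c k * F k w) = \sum_(X <- [seq c k \o* F k | k <- index_enum I]) X.
  by rewrite fct_sumE; apply/funext => w; rewrite big_map; apply: eq_bigr => k _; rewrite /= mulrC.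
rewrite expectation_sum; last first.
  by move=> X /mapP[k _ ->]; apply: Lfun_scale => //; exact: HF.
rewrite big_map -sumEFin; apply: eq_bigr => k _.
by rewrite expectationZl // EFinM fineK // expectation_fin_num.
Qed.

Lemma rect2 (I : finType) (X : I -> Omega -> R) (i j : I) (A B : set R) :
  X i @^-1` A `&` X j @^-1` B =
  rect_event X (fun k => (if k == i then A else setT) `&` (if k == j then B else setT)).
Proof.
rewrite /rect_event; apply/seteqP; split => w /=.
- move=> [XA XB] k _ /=; split; case: eqP => [->|_] //.
- move=> H; split.
  + by have := H i Logic.I; rewrite eqxx => -[].
  + by have := H j Logic.I; rewrite eqxx => -[].
Qed.

Lemma ident_E (I : finType) (X : nat -> I -> Omega -> R) (i j : I) t :
  (forall t k, measurable_fun setT (X t k)) -> ident_distr P X ->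
  expectation P (fun w => X t i w * X t j w) = expectation P (fun w => X 0%N i w * X 0%N j w).
Proof.
move=> mX hid; apply: E_mul_law => // A B mA mB; rewrite !rect2; apply: hid => k.
by apply: measurableI; case: eqP.
Qed.
End Key.

Theorem theorem10 (R : realType) (d : measure_display) (Omega : measurableType d)
  (P : probability Omega R) (n m dth : nat) (hdth : (0 < dth)%N) :
  (* (i) v_t(theta) = v_t i.i.d. in t, independent of theta *)
  (forall (A : nat -> 'cV[R]_dth -> Omega -> 'M[R]_n)
          (B : nat -> 'cV[R]_dth -> Omega -> 'M[R]_(n, m))
          (vt : nat -> Omega -> 'cV[R]_((n + m) * n)),
     (forall t i, (fun w => vt t w i 0) \in Lfun P 2%:E) ->
     iid P (fun t i w => vt t w i 0) ->
     (forall t theta w, simplex theta -> vAB A B t theta w = vt t w) ->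
     TI_SMP_with P (@simplex R dth) (vAB A B)
       (fun _ : 'I_1 => \matrix_(i, j) fine (smom P (vt 0%N) i j))
       (fun _ => const_mx 1)
     /\ TI_SMP P (@simplex R dth) (vAB A B)) /\
  (* (ii) deterministic polytope *)
  (forall (A : nat -> 'cV[R]_dth -> Omega -> 'M[R]_n)
          (B : nat -> 'cV[R]_dth -> Omega -> 'M[R]_(n, m))
          (vk : 'I_dth -> 'cV[R]_((n + m) * n)),
     (forall t theta w, simplex theta ->
        vAB A B t theta w = \sum_k theta k 0 *: vk k) ->
     TI_SMP_with P (@simplex R dth) (vAB A B)
       (M_poly (fun k k' => 2^-1 *: (vk k *m (vk k')^T + vk k' *m (vk k)^T)))
       (@phi_poly R dth)
     /\ TI_SMP P (@simplex R dth) (vAB A B)) /\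
  (* (iii) random polytope with i.i.d. random vertices *)
  (forall (A : nat -> 'cV[R]_dth -> Omega -> 'M[R]_n)
          (B : nat -> 'cV[R]_dth -> Omega -> 'M[R]_(n, m))
          (vk : nat -> 'I_dth -> Omega -> 'cV[R]_((n + m) * n)),
     (forall t k i, (fun w => vk t k w i 0) \in Lfun P 2%:E) ->
     iid P (fun t (ki : 'I_dth * 'I_((n + m) * n)) w => vk t ki.1 w ki.2 0) ->
     (forall t theta w, simplex theta ->
        vAB A B t theta w = \sum_k theta k 0 *: vk t k w) ->
     TI_SMP_with P (@simplex R dth) (vAB A B)
       (M_poly (fun k k' => \matrix_(i, j)
          (2^-1 * fine ('E_P[(fun w => vk 0%N k w i 0 * vk 0%N k' w j 0
                                   + vk 0%N k' w i 0 * vk 0%N k w j 0)%R])%E)))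
       (@phi_poly R dth)
     /\ TI_SMP P (@simplex R dth) (vAB A B)) /\
  (* (iv) uncertain mean and covariance *)
  (forall (A : nat -> 'cV[R]_dth -> Omega -> 'M[R]_n)
          (B : nat -> 'cV[R]_dth -> Omega -> 'M[R]_(n, m))
          (mu : 'I_dth -> 'cV[R]_((n + m) * n))
          (Sigma : 'I_dth -> 'M[R]_((n + m) * n)),
     (forall k, (Sigma k)^T = Sigma k) ->
     (forall theta, simplex theta ->
        indep_seq P (fun t i w => vAB A B t theta w i 0)) ->
     (forall t theta i, simplex theta ->
        (fun w => vAB A B t theta w i 0) \in Lfun P 2%:E) ->
     (forall t theta i, simplex theta ->
        ('E_P[(fun w => vAB A B t theta w i 0)%R] = (\sum_k theta k 0 * mu k i 0)%R%:E)%E) ->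
     (forall t theta i j, simplex theta ->
        covariance P (fun w => vAB A B t theta w i 0) (fun w => vAB A B t theta w j 0)
        = (\sum_k theta k 0 * Sigma k i j)%:E) ->
     TI_SMP_with P (@simplex R dth) (vAB A B)
       (M_poly (fun k k' => 2^-1 *: (mu k *m (mu k')^T + mu k' *m (mu k)^T) + Sigma k))
       (@phi_poly R dth)
     /\ TI_SMP P (@simplex R dth) (vAB A B)).
Proof.
have Hpos : (0 < dth * dth)%N by rewrite muln_gt0 hdth.
split; [|split; [|split]].
-
  move=> A B vt L2 [_ hid] Hv.
  have W : TI_SMP_with P (@simplex R dth) (vAB A B)
       (fun _ : 'I_1 => \matrix_(i, j) fine (smom P (vt 0%N) i j))
       (fun _ => const_mx 1).
    split.
    + move=> k; apply/matrixP => i j; rewrite !mxE /smom; congr fine.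
      by congr expectation; apply/funext => w; exact: mulrC.
    + move=> th _; split; first by move=> k; rewrite mxE.
      by rewrite big_ord1 mxE.
    + move=> t th Hth i j.
      rewrite big_ord1 !mxE mul1r.
      have -> : smom P (vAB A B t th) i j = smom P (vt t) i j.
        by rewrite /smom; congr expectation; apply/funext => w; rewrite Hv.
      have mX : forall t k, measurable_fun setT (fun w => vt t w k 0).
        by move=> ? ?; apply: Lfun_meas (L2 _ _).
      rewrite /smom (@ident_E R d Omega P _ (fun t i w => vt t w i 0) i j t mX hid).
      rewrite fineK //; apply: expectation_fin_num.
      exact: Lfun2_mul_Lfun1 (L2 _ _) (L2 _ _).
  by split => //; exists 1%N, (fun _ : 'I_1 => \matrix_(i, j) fine (smom P (vt 0%N) i j)), (fun _ => const_mx 1).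
-
  move=> A B vk Hv.
  have W : TI_SMP_with P (@simplex R dth) (vAB A B)
       (M_poly (fun k k' => 2^-1 *: (vk k *m (vk k')^T + vk k' *m (vk k)^T)))
       (@phi_poly R dth).
    split.
    + apply: M_poly_sym => a b; apply/matrixP => i j.
      rewrite !mxE !big_ord1 !mxE; congr (_ * _); ring.
    + by move=> th Hth; exact: simplex_phi.
    + move=> t th Hth i j.
      rewrite /smom (_ : (fun w => _) = cst ((\sum_k th k 0 * vk k i 0) * (\sum_k th k 0 * vk k j 0))); last first.
        apply/funext => w; rewrite Hv // !summxE /=; congr (_ * _); apply: eq_bigr => k _; rewrite !mxE //.
      rewrite expectation_cst sum_phiM; congr EFin.
      rewrite [RHS](eq_bigr (fun a => \sum_b th b 0 * th a 0 * (2^-1 * (vk b i 0 * vk a j 0 + vk a i 0 * vk b j 0)))); last first.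
        by move=> a _; apply: eq_bigr => b _; rewrite !mxE !big_ord1 !mxE.
      have SS := @sym_sum R dth (fun a => th a 0) (fun a b => vk a i 0 * vk b j 0); simpl in SS.
      rewrite SS sum_prod; apply: eq_bigr => a _; apply: eq_bigr => b _; ring.
  by split => //; exists (dth * dth)%N; do 2 eexists; split; [exact: Hpos | exact: W].
-
  move=> A B vk L2 [_ hid] Hv.
  have L1m : forall t a b i j, (fun w => vk t a w i 0 * vk t b w j 0) \in Lfun P 1.
    by move=> t a b i j; exact: Lfun2_mul_Lfun1 (L2 _ _ _) (L2 _ _ _).
  have mX : forall t (ki : 'I_dth * 'I_((n + m) * n)), measurable_fun setT (fun w => vk t ki.1 w ki.2 0).
    by move=> t [k i]; exact: Lfun_meas (L2 _ _ _).
  have EE : forall t a b i j, expectation P (fun w => vk t a w i 0 * vk t b w j 0)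
      = expectation P (fun w => vk 0%N a w i 0 * vk 0%N b w j 0).
    move=> t a b i j.
    exact: (@ident_E R d Omega P _ (fun t ki w => vk t ki.1 w ki.2 0) (a, i) (b, j) t mX hid).
  have ED : forall a b i j, fine (expectation P (fun w => vk 0%N a w i 0 * vk 0%N b w j 0 + vk 0%N b w i 0 * vk 0%N a w j 0))
     = fine (expectation P (fun w => vk 0%N a w i 0 * vk 0%N b w j 0)) + fine (expectation P (fun w => vk 0%N b w i 0 * vk 0%N a w j 0)).
    move=> a b i j.
    have := expectationD (L1m 0%N a b i j) (L1m 0%N b a i j).
    move=> /= ->; rewrite fineD //; exact: expectation_fin_num.
  have W : TI_SMP_with P (@simplex R dth) (vAB A B)
       (M_poly (fun k k' => \matrix_(i, j)
          (2^-1 * fine ('E_P[(fun w => vk 0%N k w i 0 * vk 0%N k' w j 0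
                                   + vk 0%N k' w i 0 * vk 0%N k w j 0)%R])%E)))
       (@phi_poly R dth).
    split.
    + apply: M_poly_sym => a b; apply/matrixP => i j.
      rewrite !mxE; congr (_ * fine _); congr expectation; apply/funext => w; ring.
    + by move=> th Hth; exact: simplex_phi.
    + move=> t th Hth i j.
      rewrite /smom (_ : (fun w => _) = fun w => \sum_(p : 'I_dth * 'I_dth) (th p.1 0 * th p.2 0) * (vk t p.1 w i 0 * vk t p.2 w j 0)); last first.
        apply/funext => w; rewrite Hv // !summxE sum_prod pair_bigA; apply: eq_bigr => -[a b] _ /=; rewrite !mxE; ring.
      rewrite E_lin; last by move=> -[a b]; exact: L1m.
      rewrite sum_phiM; congr EFin.
      rewrite [RHS](eq_bigr (fun a => \sum_b th b 0 * th a 0 * (2^-1 * (fine (expectation P (fun w => vk 0%N b w i 0 * vk 0%N a w j 0)) + fine (expectation P (fun w => vk 0%N a w i 0 * vk 0%N b w j 0)))))); last first.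
        by move=> a _; apply: eq_bigr => b _; rewrite !mxE ED.
      have SS := @sym_sum R dth (fun a => th a 0) (fun a b => fine (expectation P (fun w => vk 0%N a w i 0 * vk 0%N b w j 0))); simpl in SS.
      rewrite SS pair_bigA; apply: eq_bigr => -[a b] _ /=; by rewrite EE.
  by split => //; exists (dth * dth)%N; do 2 eexists; split; [exact: Hpos | exact: W].
-
  move=> A B mu Sig Ssym _ L2 Emu Cov.
  have W : TI_SMP_with P (@simplex R dth) (vAB A B)
       (M_poly (fun k k' => 2^-1 *: (mu k *m (mu k')^T + mu k' *m (mu k)^T) + Sig k))
       (@phi_poly R dth).
    split.
    + apply: M_poly_sym => a b; apply/matrixP => i j.
      have Sij : Sig a j i = Sig a i j by rewrite -[in RHS](Ssym a) mxE.
      rewrite !mxE !big_ord1 !mxE Sij; congr (_ * _ + _); ring.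
    + by move=> th Hth; exact: simplex_phi.
    + move=> t th Hth i j.
      have hi := L2 t th i Hth; have hj := L2 t th j Hth.
      have C := Cov t th i j Hth.
      rewrite covarianceE in C; [|exact: L2_L1 hi|exact: L2_L1 hj|exact: Lfun2_mul_Lfun1 hi hj].
      rewrite !Emu // in C.
      have fin := expectation_fin_num (Lfun2_mul_Lfun1 hi hj).
      rewrite /smom.
      move: C fin; set e := expectation P _ => C fin.
      rewrite -(fineK fin) in C *.
      rewrite -EFinM -EFinB in C; case: C => C.
      congr EFin; rewrite sum_phiM.
      rewrite (eq_bigr (fun a => \sum_b th b 0 * th a 0 * (2^-1 * (mu b i 0 * mu a j 0 + mu a i 0 * mu b j 0)) + \sum_b th b 0 * th a 0 * Sig b i j)); last first.
        by move=> a _; rewrite -big_split; apply: eq_bigr => b _; rewrite !mxE !big_ord1 !mxE /=; ring.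
      rewrite big_split /=.
      have SS := @sym_sum R dth (fun a => th a 0) (fun a b => mu a i 0 * mu b j 0); simpl in SS.
      rewrite SS.
      have -> : \sum_a \sum_b th a 0 * th b 0 * (mu a i 0 * mu b j 0) = (\sum_k th k 0 * mu k i 0) * (\sum_k th k 0 * mu k j 0).
        by rewrite sum_prod; apply: eq_bigr => a _; apply: eq_bigr => b _; ring.
      have -> : \sum_a \sum_b th b 0 * th a 0 * Sig b i j = \sum_k th k 0 * Sig k i j.
        case: Hth => _ th1.
        rewrite (eq_bigr (fun a => th a 0 * \sum_b th b 0 * Sig b i j)); last first.
          by move=> a _; rewrite mulr_sumr; apply: eq_bigr => b _; ring.
        by rewrite -mulr_suml th1 mul1r.
      rewrite -C; ring.
  by split => //; exists (dth * dth)%N; do 2 eexists; split; [exact: Hpos | exact: W].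
Qed.
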